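(* Consider Algorithm 1 applied to $\min\varphi(w)$ s.t. $w\in D$, and fix an outer iteration $j$. Then either the inner loop terminates (i.e., some $i$ satisfies the nonmonotone Armijo condition), or $\|\gamma_{j,i}(w^j-w^{j,i})+\nabla\varphi(w^{j,i})-\nabla\varphi(w^j)\|\to0$ as $i\to\infty$. Moreover, if the inner loop does not terminate, then $w^{j,i}\to w^j$ as $i\to\infty$ and $w^j$ is an M-stationary point of this problem, i.e., $0\in\nabla\varphi(w^j)+\mathcal N^{\lim}_D(w^j)$.
   Context: $\mathbb W$ is a Euclidean space, $\varphi\colon\mathbb W\to\mathbb R$ continuously differentiable, $D\subset\mathbb W$ nonempty and closed (neither need be convex). The limiting normal cone at $\bar w\in D$ is $\mathcal N^{\lim}_D(\bar w):=\limsup_{w\to\bar w}\operatorname{cone}(w-\Pi_D(w))$ (outer set limit, $\Pi_D$ the multivalued Euclidean projection onto $D$). Algorithm 1 (general spectral gradient method, without termination test): parameters $\tau>1$, $\sigma\in(0,1)$, $0<\gamma_{\min}\le\gamma_{\max}<\infty$, $m\in\mathbb N$, starting point $w^0\in D$. For $j=0,1,2,\dots$: set $m_j:=\min(j,m)$ and choose $\gamma_j^0\in[\gamma_{\min},\gamma_{\max}]$; for $i=1,2,\dots$ set $\gamma_{j,i}:=\tau^{i-1}\gamma_j^0$ and compute a (global) solution $w^{j,i}$ of $\min_w \varphi(w^j)+\langle\nabla\varphi(w^j),w-w^j\rangle+\frac{\gamma_{j,i}}2\|w-w^j\|^2$ s.t. $w\in D$ (subproblem $Q(j,i)$); the inner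 loop stops at the first $i$ with $\varphi(w^{j,i})\le\max_{r=0,\dots,m_j}\varphi(w^{j-r})+\sigma\langle\nabla\varphi(w^j),w^{j,i}-w^j\rangle$; then set $i_j:=i$, $\gamma_j:=\gamma_{j,i_j}$, $w^{j+1}:=w^{j,i_j}$. *)

(* Defs.v *)
From HB Require Import structures.
From mathcomp Require Import all_boot all_order all_algebra.
From mathcomp Require Import all_classical all_reals all_analysis.
Set Implicit Arguments. Unset Strict Implicit. Unset Printing Implicit Defensive.
Import Order.TTheory GRing.Theory Num.Theory.
Import numFieldNormedType.Exports.
Local Open Scope classical_set_scope.
Local Open Scope ring_scope.

Section Defs.
Variables (R : realType) (n : nat).
Local Notation W := 'rV[R]_n.

Definition dotw (u v : W) : R := (u *m v^T) 0 0.
Definition enorm (u : W) : R := Num.sqrt (dotw u u).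

Definition proj (D : set W) (w : W) : set W :=
  [set p | D p /\ forall q, D q -> enorm (w - p) <= enorm (w - q)].

Definition cone (S : set W) : set W :=
  [set v | exists t s, 0 <= t /\ S s /\ v = t *: s].

(* limiting normal cone: outer (Painleve-Kuratowski) limit of cone(w - Pi_D(w)) as w -> wb *)
Definition limnormal (D : set W) (wb : W) : set W :=
  [set v | exists (wk vk : nat -> W),
     wk @ \oo --> wb /\ vk @ \oo --> v /\
     forall k, cone [set wk k - p | p in proj D (wk k)] (vk k)].

Definition Mstationary (g : W -> W) (D : set W) (w : W) : Prop :=
  exists v, limnormal D w v /\ 0 = g w + v.

Definition qmodel (phi : W -> R) (g : W -> W) (wj : W) (gam : R) (x : W) : R :=
  phi wj + dotw (g wj) (x - wj) + gam / 2 * (enorm (x - wj)) ^+ 2.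

Definition Qsol (phi : W -> R) (g : W -> W) (D : set W) (wj : W) (gam : R) (x : W) : Prop :=
  D x /\ forall y, D y -> qmodel phi g wj gam x <= qmodel phi g wj gam y.

Fixpoint maxhist (phi : W -> R) (w : nat -> W) (j k : nat) : R :=
  match k with
  | 0 => phi (w j)
  | k'.+1 => Num.max (maxhist phi w j k') (phi (w (j - k'.+1)%N))
  end.

Definition armijo (phi : W -> R) (g : W -> W) (sigma : R) (m : nat)
    (w : nat -> W) (j : nat) (x : W) : Prop :=
  phi x <= maxhist phi w j (minn j m) + sigma * dotw (g (w j)) (x - w j).

(* Sequences generated by Algorithm 1 up to outer iteration j:
   w k = w^k, g0 k = gamma_k^0, wi k i = w^{k,i} (i >= 1). *)
Definition alg_run (phi : W -> R) (g : W -> W) (D : set W)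
    (tau sigma gmin gmax : R) (m : nat)
    (w : nat -> W) (g0 : nat -> R) (wi : nat -> nat -> W) (j : nat) : Prop :=
  D (w 0%N) /\
  (forall k, (k <= j)%N ->
     gmin <= g0 k <= gmax /\
     forall i, (1 <= i)%N -> Qsol phi g D (w k) (tau ^+ i.-1 * g0 k) (wi k i)) /\
  (forall k, (k < j)%N -> exists ik, (1 <= ik)%N /\
     armijo phi g sigma m w k (wi k ik) /\
     (forall i, (1 <= i < ik)%N -> ~ armijo phi g sigma m w k (wi k i)) /\
     w k.+1 = wi k ik).

End Defs.

(* Main.v *)
Require Import Defs.
From HB Require Import structures.
From mathcomp Require Import all_boot all_order all_algebra.
From mathcomp Require Import all_classical all_reals all_analysis.
From mathcomp Require Import ring lra zify.
Import Order.TTheory GRing.Theory Num.Theory.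
Import numFieldNormedType.Exports.
Set Implicit Arguments. Unset Strict Implicit.
Local Open Scope classical_set_scope.
Local Open Scope ring_scope.

Section Helpers.
Variables (R : realType) (n : nat).
Local Notation W := 'rV[R]_n.
Implicit Types (u v x : W).

Lemma dotwE u v : dotw u v = \sum_k u 0 k * v 0 k.
Proof. by rewrite /dotw !mxE; apply: eq_bigr => k _; rewrite mxE. Qed.

Lemma dotwC u v : dotw u v = dotw v u.
Proof. by rewrite !dotwE; apply: eq_bigr => k _; rewrite mulrC. Qed.

Lemma dotwDl u v x : dotw (u + v) x = dotw u x + dotw v x.
Proof. by rewrite !dotwE -big_split; apply: eq_bigr => k _; rewrite mxE mulrDl. Qed.

Lemma dotwDr u v x : dotw x (u + v) = dotw x u + dotw x v.
Proof. by rewrite dotwC dotwDl !(dotwC x). Qed.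

Lemma dotwZl (c : R) u v : dotw (c *: u) v = c * dotw u v.
Proof. by rewrite !dotwE mulr_sumr; apply: eq_bigr => k _; rewrite mxE mulrA. Qed.

Lemma dotwZr (c : R) u v : dotw u (c *: v) = c * dotw u v.
Proof. by rewrite dotwC dotwZl dotwC. Qed.

Lemma dotwNl u v : dotw (- u) v = - dotw u v.
Proof. by rewrite -scaleN1r dotwZl mulN1r. Qed.

Lemma dotwNr u v : dotw u (- v) = - dotw u v.
Proof. by rewrite dotwC dotwNl dotwC. Qed.

Lemma dotwBl u v x : dotw (u - v) x = dotw u x - dotw v x.
Proof. by rewrite dotwDl dotwNl. Qed.

Lemma dotwBr u v x : dotw x (u - v) = dotw x u - dotw x v.
Proof. by rewrite dotwDr dotwNr. Qed.

Lemma dotw0r u : dotw u 0 = 0.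
Proof. by rewrite dotwE big1 // => k _; rewrite mxE mulr0. Qed.

Lemma dotw0l u : dotw 0 u = 0.
Proof. by rewrite dotwC dotw0r. Qed.

Lemma dotw_ge0 u : 0 <= dotw u u.
Proof. by rewrite dotwE; apply: sumr_ge0 => k _; rewrite -expr2 sqr_ge0. Qed.

Lemma enorm_ge0 u : 0 <= enorm u.
Proof. exact: sqrtr_ge0. Qed.

Lemma enorm_sq u : enorm u ^+ 2 = dotw u u.
Proof. by rewrite sqr_sqrtr // dotw_ge0. Qed.

Lemma enorm_le u v : dotw u u <= dotw v v -> enorm u <= enorm v.
Proof. by move=> h; rewrite /enorm ler_sqrt // dotw_ge0. Qed.

Lemma enorm_leC u (c : R) : 0 <= c -> dotw u u <= c ^+ 2 -> enorm u <= c.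
Proof. by move=> c0 h; rewrite /enorm -(ger0_norm c0) -sqrtr_sqr ler_sqrt // sqr_ge0. Qed.

Lemma enormZ (c : R) u : enorm (c *: u) = `|c| * enorm u.
Proof. by rewrite /enorm dotwZl dotwZr mulrA -expr2 sqrtrM ?sqr_ge0 // sqrtr_sqr. Qed.

Lemma entry_le u k : `|u 0 k| <= `|u|.
Proof.
rewrite [leRHS]/Num.Def.normr /= mx_normrE.
exact: (le_bigmax _ (fun ij : 'I_1 * 'I_n => `|u ij.1 ij.2|) (0, k)).
Qed.

Lemma norm_le_enorm u : `|u| <= enorm u.
Proof.
rewrite [leLHS]/Num.Def.normr /= mx_normrE; apply: bigmax_le => [|[i k] _]; first exact: enorm_ge0.
rewrite /= (ord1 i) -ler_sqr ?nnegrE ?enorm_ge0 // enorm_sq dotwE real_normK ?num_real //.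
rewrite (bigD1 k) //= -expr2 lerDl; apply: sumr_ge0 => l _; rewrite -expr2 sqr_ge0 //.
Qed.

Lemma enorm_le_norm u : enorm u <= n.+1%:R * `|u|.
Proof.
apply: enorm_leC; first by rewrite mulr_ge0.
rewrite dotwE (@le_trans _ _ (\sum_(k < n) `|u| ^+ 2)) //.
  apply: ler_sum => k _; rewrite -expr2 -real_normK ?num_real //.
  by rewrite ler_sqr ?nnegrE // entry_le.
rewrite sumr_const card_ord exprMn -[X in X <= _]mulr_natl ler_wpM2r ?sqr_ge0 //.
by rewrite -natrX ler_nat; case: n => // m; rewrite expnS; nia.
Qed.

Lemma cvg_enorm (s : nat -> W) :
  s @ \oo --> (0 : W) <-> (fun i => enorm (s i)) @ \oo --> (0 : R).
Proof.
split => h.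
  apply/cvgr0Pnorm_lt => e e0.
  have e1 : 0 < e / n.+1%:R by rewrite divr_gt0.
  move/cvgr0Pnorm_lt: h => /(_ _ e1); apply: filterS => i hi.
  rewrite ger0_norm ?enorm_ge0 //; apply: (le_lt_trans (enorm_le_norm _)).
  by rewrite mulrC -ltr_pdivlMr.
apply/cvgr0Pnorm_lt => e e0.
move/cvgr0Pnorm_lt: h => /(_ _ e0); apply: filterS => i hi.
by apply: (le_lt_trans (norm_le_enorm _)); rewrite -[enorm _]ger0_norm ?enorm_ge0.
Qed.

Lemma dotw_expand (a G : W) (k : R) :
  dotw (a - k *: G) (a - k *: G) = dotw a a - 2 * k * dotw G a + k ^+ 2 * dotw G G.
Proof.
rewrite !dotwBl !dotwBr !dotwZl !dotwZr (dotwC a G); ring.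
Qed.

Lemma qmodel_proj (phi : W -> R) (g : W -> W) (wj y : W) (c : R) : 0 < c ->
  dotw (wj - c^-1 *: g wj - y) (wj - c^-1 *: g wj - y) =
  2 * c^-1 * (qmodel phi g wj c y - phi wj) + c^-1 ^+ 2 * dotw (g wj) (g wj).
Proof.
move=> c0; rewrite /qmodel enorm_sq (addrAC wj) dotw_expand.
have -> : y - wj = - (wj - y) by rewrite opprB.
rewrite dotwNr ?dotwNl ?dotwNr ?opprK.
field; rewrite gt_eqF //.
Qed.

End Helpers.

Unset Implicit Arguments.
Set Strict Implicit.

Theorem mainTheorem3 (R : realType) (n : nat)
  (phi : 'rV[R]_n -> R) (g : 'rV[R]_n -> 'rV[R]_n) (D : set 'rV[R]_n)
  (tau sigma gmin gmax : R) (m : nat)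
  (w : nat -> 'rV[R]_n) (g0 : nat -> R) (wi : nat -> nat -> 'rV[R]_n) (j : nat) :
  (forall x, differentiable phi x) ->
  (forall x h, 'd phi x h = dotw (g x) h) ->
  continuous g ->
  closed D -> D !=set0 ->
  1 < tau -> 0 < sigma < 1 -> 0 < gmin -> gmin <= gmax ->
  alg_run phi g D tau sigma gmin gmax m w g0 wi j ->
  (exists i, (1 <= i)%N /\ armijo phi g sigma m w j (wi j i)) \/
  [/\ (fun i => enorm ((tau ^+ i.-1 * g0 j) *: (w j - wi j i)
                        + g (wi j i) - g (w j))) @ \oo --> (0 : R),
      (fun i => wi j i) @ \oo --> w j
    & Mstationary g D (w j)].
Proof.
move=> dphi dg gc Dcl Dne tau1 /andP[s0 s1] gmin0 gminmax [Dw0 [Hq Ha]].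
case: (pselect (exists i, (1 <= i)%N /\ armijo phi g sigma m w j (wi j i))) => [h|nA];
  [by left|right].
have Dw : forall k, (k <= j)%N -> D (w k).
  elim=> [|k IH] hk //; have [ik [ik1 [_ [_ ->]]]] := Ha k hk.
  by have [_ /(_ ik ik1) []] := Hq k (ltnW hk).
set x := w j; set G := g x.
pose gam i := tau ^+ i.-1 * g0 j.
have [/andP[g0lo _] Qj] := Hq j (leqnn j).
have gam0 : forall i, 0 < gam i.
  by move=> i; rewrite mulr_gt0 ?exprn_gt0 //; lra.
pose d i := wi j i - x.
have F1 : forall i, (1 <= i)%N -> dotw G (d i) + gam i / 2 * dotw (d i) (d i) <= 0.
  move=> i i1; have [_ /(_ x (Dw j (leqnn j)))] := Qj i i1.
  rewrite /qmodel !enorm_sq subrr dotw0r dotw0l -/G -/(d i) -/(gam i); lra.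
have mh : forall k, phi x <= maxhist phi w j k.
  by elim => //= k IH; rewrite le_max IH.
have F2 : forall i, (1 <= i)%N -> phi x + sigma * dotw G (d i) < phi (wi j i).
  move=> i i1; have : ~ armijo phi g sigma m w j (wi j i) by move=> hA; apply: nA; exists i.
  rewrite /armijo -/x -/G -/(d i) => /negP; rewrite -ltNge => h.
  by apply: le_lt_trans h; rewrite lerD2r.
have tau0 : 0 < tau by lra.
have g0p : 0 < g0 j by lra.
have gaminv : (fun i => (gam i)^-1) @ \oo --> (0 : R).
  rewrite -cvg_shiftS.
  have -> : [sequence (gam n0.+1)^-1]_n0 = geometric ((g0 j)^-1) (tau^-1).
    apply/funext => k /=; rewrite /gam /= invfM exprVn mulrC //.
  apply: cvg_geometric; rewrite ger0_norm ?invr_ge0 ?ltW // invf_lt1 //.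
have Fd : forall i, (1 <= i)%N -> enorm (d i) <= 2 * enorm G * (gam i)^-1.
  move=> i i1; apply: enorm_leC; first by rewrite !mulr_ge0 ?enorm_ge0 ?invr_ge0 ?ltW.
  have e := dotw_ge0 (G + (gam i / 2) *: d i).
  rewrite !dotwDl !dotwDr !dotwZl !dotwZr (dotwC (d i) G) in e.
  move: e; have := F1 i i1; have := gam0 i.
  set q := dotw (d i) (d i); set s := dotw G (d i); set NG := dotw G G.
  set c := gam i => c0 h1 e.
  have h2 : c ^+ 2 * q <= 4 * NG by nra.
  rewrite !exprMn enorm_sq -/NG.
  have -> : q = (c ^+ 2 * q) * (c^-1) ^+ 2 by field; rewrite gt_eqF.
  rewrite ler_wpM2r ?sqr_ge0 //; nra.
have dcvg : d @ \oo --> (0 : 'rV[R]_n).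
  apply/cvg_enorm; apply/cvgr0Pnorm_lt => e e0.
  have c0 : 0 < 2 * enorm G + 1 by have := enorm_ge0 G; lra.
  have ec0 : 0 < e / (2 * enorm G + 1) by rewrite divr_gt0.
  have h := (cvgr0Pnorm_lt _).1 gaminv _ ec0.
  near=> i.
  have i1 : (1 <= i)%N by near: i; exact: nbhs_infty_ge.
  have hi : `|(gam i)^-1| < e / (2 * enorm G + 1) by near: i; exact: h.
  rewrite ger0_norm ?enorm_ge0 //; apply: (le_lt_trans (Fd i i1)).
  rewrite ger0_norm ?invr_ge0 ?ltW // in hi.
  rewrite ltr_pdivlMr // mulrC in hi.
  have := enorm_ge0 G; have := gam0 i; rewrite -invr_gt0 => gi ge; nra.
have wicvg : (fun i => wi j i) @ \oo --> x.
  have -> : (fun i => wi j i) = (fun i => d i + x) by apply/funext => i; rewrite /d subrK.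
  by rewrite -[x in _ --> x]add0r; apply: cvgD => //; exact: cvg_cst.
have Fgd : (fun i => gam i * enorm (d i)) @ \oo --> (0 : R).
  apply/cvgr0Pnorm_lt => e e0.
  have eta0 : 0 < e * (1 - sigma) / 2 by rewrite divr_gt0 // mulr_gt0 // subr_gt0.
  have Ht := diff_locally (dphi x).
  move/eqaddoP: Ht => /(_ _ eta0) Ht.
  have h := dcvg _ Ht.
  near=> i.
  have i1 : (1 <= i)%N by near: i; exact: nbhs_infty_ge.
  have hT : (d i) \in [set h | `|(phi \o shift x - (cst (phi x) + 'd phi x)) h| <= e * (1 - sigma) / 2 * `|id h|].
    by rewrite inE; near: i; exact: h.
  rewrite inE /= in hT.
  have hT2 : `|phi (d i + x) - (phi x + 'd phi x (d i))| <= e * (1 - sigma) / 2 * `|d i| := hT.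
  rewrite dg -/G {1}/d subrK in hT2.
  have := F1 i i1; have := F2 i i1; have := gam0 i; have := norm_le_enorm (d i).
  have := enorm_sq (d i); have := enorm_ge0 (d i); move: hT2.
  set E := enorm (d i); set q := dotw (d i) (d i); set s := dotw G (d i).
  set c := gam i; set N := `|d i|; set P := phi (wi j i).
  set T := phi x.
  rewrite ler_norml => /andP[_ hu] E0 Eq NE c0 hF2 hF1.
  rewrite -Eq in hF1.
  have s1' : 0 < 1 - sigma by lra.
  have k0 : e * (1 - sigma) / 2 * N <= e * (1 - sigma) / 2 * E by rewrite ler_wpM2l // ltW.
  have k1 : sigma * s - s < e * (1 - sigma) / 2 * E by lra.
  have k2 : (1 - sigma) * (c / 2 * E ^+ 2) <= (1 - sigma) * (- s).
  by apply: ler_wpM2l; lra.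
  have k3 : (1 - sigma) * (c * E ^+ 2) < (1 - sigma) * (e * E) by nra.
  rewrite ltr_pM2l // in k3.
  have Ep : 0 < E.
    rewrite lt0r E0 andbT; apply/eqP => E00; move: k3; rewrite E00; lra.
  rewrite ger0_norm; last by rewrite mulr_ge0 // ltW.
  by rewrite expr2 mulrA ltr_pM2r // in k3.
have gd : (fun i => gam i *: d i) @ \oo --> (0 : 'rV[R]_n).
  apply/cvg_enorm.
  have -> : (fun i => enorm (gam i *: d i)) = (fun i => gam i * enorm (d i)).
    by apply/funext => i0; rewrite enormZ ger0_norm // ltW.
  exact: Fgd.
have gd' : (fun k => gam k.+1 *: d k.+1) @ \oo --> (0 : 'rV[R]_n).
  by rewrite (cvg_shiftS (fun i => gam i *: d i)).
have gs : (fun k => (gam k.+1)^-1) @ \oo --> (0 : R).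
  by rewrite (cvg_shiftS (fun i => (gam i)^-1)).
split.
- apply/(cvg_enorm (fun i => (tau ^+ i.-1 * g0 j) *: (x - wi j i) + g (wi j i) - G)).
  have gg : (fun i => g (wi j i) - G) @ \oo --> (0 : 'rV[R]_n).
    rewrite -(subrr G); apply: cvgB; last exact: cvg_cst.
    exact: (continuous_cvg _ (gc x)).
  have := cvgD (cvgN gd) gg; rewrite oppr0 addr0.
  have -> : (fun i => (tau ^+ i.-1 * g0 j) *: (x - wi j i) + g (wi j i) - G) =
    (fun i => - (gam i *: d i) + (g (wi j i) - G)).
    by apply/funext => i0; rewrite /d -scalerN opprB addrA.
  by move=> h; exact: (h _ _).
- exact: wicvg.
exists (- G); split; last by rewrite subrr.
exists (fun k => x - (gam k.+1)^-1 *: G),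
  (fun k => gam k.+1 *: ((x - (gam k.+1)^-1 *: G) - wi j k.+1)); split; [|split].
- have := cvgB (cvg_cst x) (cvgZ gs (cvg_cst G)); rewrite scale0r subr0.
  by move=> h; exact: (h _ _).
- have := cvgB (cvgN gd') (cvg_cst G); rewrite oppr0 sub0r.
  have -> : (fun k => gam k.+1 *: ((x - (gam k.+1)^-1 *: G) - wi j k.+1)) =
    (fun k => - (gam k.+1 *: d k.+1) - G).
    apply/funext => k; rewrite /d (addrAC x) scalerDr scalerN scalerA divff ?gt_eqF //.
    by rewrite scale1r -scalerN opprB.
  by move=> h; exact: (h _ _).
move=> k; exists (gam k.+1), (x - (gam k.+1)^-1 *: G - wi j k.+1); split; first exact: ltW.
split=> //; exists (wi j k.+1) => //; have [Dp Hp] := Qj k.+1 isT; split => // q Dq.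
apply: enorm_le; rewrite !(qmodel_proj phi) // -/x -/G.
rewrite lerD2r; apply: ler_wpM2l; first by rewrite mulr_ge0 // invr_ge0 ltW.
by rewrite lerD2r; exact: Hp q Dq.
Unshelve. all: by end_near.
Qed.
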